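(* Let the random permutation $\sigma$ be uniformly distributed on the symmetric group $S_N$, and let $l\ge 1$ be an integer. Then $$\mathrm{Ex}\big[C_\sigma^{\underline{l}}\big] = (-1)^l\, Z_l\big(-\zeta_N(1), -\zeta_N(2), \ldots, -\zeta_N(l)\big),$$ where $$Z_l(g_1,\ldots,g_l) = \sum_{\substack{n_1\ge0,\ldots,n_l\ge 0\\ n_1+2n_2+\cdots+ln_l=l}} \frac{l!\, g_1^{n_1}g_2^{n_2}\cdots g_l^{n_l}}{n_1!\,1^{n_1}\, n_2!\,2^{n_2}\cdots n_l!\,l^{n_l}}$$ and $\zeta_N(m)=\sum_{1\le n\le N} n^{-m}$.
   Context: For a permutation $\pi$ of $\{1,\ldots,N\}$, $C_\pi$ denotes the number of cycles of $\pi$; $\mathrm{Ex}$ denotes expectation. For a real number $x$, $x^{\underline{l}}=x(x-1)\cdots(x-l+1)$ denotes the $l$-th falling power. *)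

(* Defs.v *)
From mathcomp Require Import all_boot all_order all_fingroup all_algebra.
Set Implicit Arguments. Unset Strict Implicit. Unset Printing Implicit Defensive.
Import Order.TTheory GRing.Theory Num.Theory.
Local Open Scope ring_scope.

Definition ncycles (N : nat) (s : {perm 'I_N}) : nat := #|porbits s|.

Definition falling (R : pzRingType) (x : R) (l : nat) : R :=
  \prod_(i < l) (x - i%:R).

Definition Ex_unif (R : fieldType) (N : nat) (f : {perm 'I_N} -> R) : R :=
  (#|{perm 'I_N}|%:R)^-1 * \sum_(s : {perm 'I_N}) f s.

Definition zetaN (R : fieldType) (N m : nat) : R :=
  \sum_(1 <= n < N.+1) ((n%:R : R) ^+ m)^-1.

(* The tuple (n_1,...,n_l) is
   encoded by n : {ffun 'I_l -> 'I_l.+1} with n k = n_{k+1}; the bound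
   n_k <= l is automatic from n_1 + 2 n_2 + ... + l n_l = l. *)
Definition Zcyc (R : fieldType) (l : nat) (g : nat -> R) : R :=
  \sum_(n : {ffun 'I_l -> 'I_l.+1} | (\sum_(k < l) k.+1 * n k == l)%N)
     (l`!%:R * \prod_(k < l) g k.+1 ^+ n k
       / \prod_(k < l) ((n k)`!%:R * (k.+1)%:R ^+ n k)).

(* Main.v *)
Require Import Defs.
From mathcomp Require Import all_boot all_order all_fingroup all_algebra.
From mathcomp Require Import zify ring lra.
Import GRing.Theory Num.Theory.

Module Aux.
Set Implicit Arguments. Unset Strict Implicit. Unset Printing Implicit Defensive.

Section Comb.
Variable N : nat.
Local Notation m := (@ord_max N).
Local Notation lp s := (lift_perm m m s).

Lemma lp_pow (s : {perm 'I_N}) i (x : 'I_N) :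
  ((lp s) ^+ i)%g (lift m x) = lift m ((s ^+ i)%g x).
Proof.
rewrite !permX; elim: i => [|i IH] //=; by rewrite IH lift_perm_lift.
Qed.

Lemma lp_porbit (s : {perm 'I_N}) (x : 'I_N) :
  porbit (lp s) (lift m x) = [set lift m y | y in porbit s x].
Proof.
apply/setP => z; apply/porbitP/imsetP.
  move=> [i ->]; exists ((s ^+ i)%g x); last by rewrite lp_pow.
  by apply/porbitP; exists i.
move=> [y /porbitP [i ->] ->]; exists i; by rewrite lp_pow.
Qed.

Lemma lp_porbit_m (s : {perm 'I_N}) : porbit (lp s) m = [set m].
Proof.
apply/setP => z; rewrite inE; apply/porbitP/eqP.
  by move=> [i ->]; rewrite permX_fix // lift_perm_id.
by move=> ->; exists 0%N; rewrite expg0 perm1.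
Qed.

Lemma ncycles_lp (s : {perm 'I_N}) : ncycles (lp s) = (ncycles s).+1.
Proof.
rewrite /ncycles /porbits.
have imT : forall (T : finType) (U : finType) (f : T -> U), [set f x | x in T] = [set f x | x in [set: T]].
  by move=> T U f; apply/setP => z; apply/imsetP/imsetP => -[x _ ->]; exists x; rewrite ?inE.
rewrite !imT.
have -> : [set: 'I_N.+1] = m |: [set lift m x | x in [set: 'I_N]].
  apply/setP => z; rewrite !inE; case: (unliftP m z) => [j|] ->.
    by rewrite imset_f ?inE ?orbT.
  by rewrite eqxx.
rewrite imsetU1 lp_porbit_m -imset_comp.
have -> : [set (porbit (lp s) \o lift m) x | x in [set: 'I_N]] =
          [set [set lift m y | y in A] | A : {set 'I_N} in [set porbit s x | x in [set: 'I_N]]].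
  rewrite -imset_comp; apply: eq_imset => x /=; exact: lp_porbit.
rewrite cardsU1 (card_imset _ (imset_inj (@lift_inj _ m))).
suff -> : [set m] \notin [set [set lift m y | y in A] | A : {set 'I_N} in [set porbit s x | x in [set: 'I_N]]] by [].
apply/imsetP => -[A _ HA].
have : m \in [set m] by rewrite inE.
rewrite HA => /imsetP [y _] /eqP; by rewrite (negbTE (neq_lift _ _)).
Qed.

Definition Phi (p : {perm 'I_N} * 'I_N.+1) : {perm 'I_N.+1} :=
  (tperm m p.2 * lp p.1)%g.

Lemma Phi_inj : injective Phi.
Proof.
move=> [s1 j1] [s2 j2]; rewrite /Phi /= => E.
have Hj : forall s j, (tperm m j * lp s)%g j = m.
  by move=> s j; rewrite permM tpermR lift_perm_id.
have ej : j1 = j2.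
  apply: (@perm_inj _ (tperm m j1 * lp s1)%g); by rewrite {2}E !Hj.
subst j2; move/mulgI: E => E.
congr pair; apply/permP => k; apply: (@lift_inj _ m).
by have := congr1 (fun p : {perm _} => p (lift m k)) E; rewrite /= !lift_perm_lift.
Qed.

Lemma Phi_bij : bijective Phi.
Proof.
apply: inj_card_bij; first exact: Phi_inj.
by rewrite card_prod !card_Sn card_ord factS mulnC.
Qed.

Lemma ncycles_Phi s j :
  ncycles (Phi (s, j)) = if j == m then (ncycles s).+1 else ncycles s.
Proof.
rewrite /Phi /=; case: (eqVneq j m) => [-> | Hne].
  by rewrite tperm1 mul1g ncycles_lp.
have := porbits_mul_tperm (lp s) m j.
have -> : (m \notin porbit (lp s) j) = true.
  by apply/negP; rewrite porbit_sym lp_porbit_m inE (negbTE Hne).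
rewrite eq_sym Hne /= -/(ncycles _) -/(ncycles _) ncycles_lp.
lia.
Qed.

Lemma sum_perm_succ (R : nzRingType) (f : nat -> R) :
  (\sum_(s : {perm 'I_N.+1}) f (ncycles s))%R =
  (\sum_(s : {perm 'I_N}) (f (ncycles s).+1 + f (ncycles s) *+ N))%R.
Proof.
rewrite (reindex Phi); last by apply: onW_bij; exact: Phi_bij.
rewrite -(pair_bigA _ (fun s j => f (ncycles (Phi (s, j))))) /=.
apply: eq_bigr => s _.
rewrite (bigD1 m) //= ncycles_Phi eqxx; congr (_ + _)%R.
rewrite (eq_bigr (fun _ => f (ncycles s))); last first.
  by move=> j /negbTE Hj; rewrite ncycles_Phi Hj.
rewrite sumr_const; congr (_ *+ _)%R.
by rewrite cardC1 card_ord.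
Qed.
End Comb.

Section BB.
Local Open Scope ring_scope.

Section Poly.
Variable R : numFieldType.
Implicit Types (p q G : {poly R}).

Definition sat l G p := forall i, (i < l)%N -> p^`()`_i = (G * p)`_i.

Lemma coefM_cong l (a b c : {poly R}) : (forall i, (i < l)%N -> a`_i = b`_i) ->
  forall i, (i < l)%N -> (a * c)`_i = (b * c)`_i.
Proof.
move=> H i Hi; rewrite !coefM; apply: eq_bigr => j _; rewrite H //.
exact: leq_ltn_trans (leq_ord j) Hi.
Qed.

Lemma sat1 l : sat l 0 1.
Proof. by move=> i _; rewrite mul0r -polyC1 derivC. Qed.

Lemma satM l G1 G2 p q : sat l G1 p -> sat l G2 q -> sat l (G1 + G2) (p * q).
Proof.
move=> Hp Hq i Hi; rewrite derivM coefD (coefM_cong q Hp) // (mulrC p (q^`())) (coefM_cong p Hq) //.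
rewrite -coefD; have -> : G1 * p * q + G2 * q * p = (G1 + G2) * (p * q) by ring.
by [].
Qed.

Lemma sat_prod l (I : Type) (r : seq I) (P : pred I) (G E : I -> {poly R}) :
  (forall i, P i -> sat l (G i) (E i)) ->
  sat l (\sum_(i <- r | P i) G i) (\prod_(i <- r | P i) E i).
Proof.
move=> H; apply: (big_ind2 (sat l)); [exact: sat1 | | exact: H].
by move=> *; exact: satM.
Qed.

Lemma sat_uniq l G p q : sat l G p -> sat l G q -> p`_0 = q`_0 ->
  forall i, (i <= l)%N -> p`_i = q`_i.
Proof.
move=> Hp Hq H0.
suff HS : forall i, (i <= l)%N -> forall j, (j <= i)%N -> p`_j = q`_j.
  by move=> i0 Hi0; exact: (HS i0 Hi0 i0 (leqnn i0)).
elim=> [|i IH] Hi j Hj.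
  by move: Hj; rewrite leqn0 => /eqP ->.
move: Hj; rewrite leq_eqVlt => /orP [/eqP -> | Hj]; last first.
  by apply: IH => //; exact: ltnW.
have Ep := Hp i Hi; have Eq := Hq i Hi; rewrite !coef_deriv in Ep Eq.
have E : (G * p)`_i = (G * q)`_i.
  rewrite !coefM; apply: eq_bigr => k _; rewrite IH ?(ltnW Hi) ?leq_subr //.
apply: (pmulrnI (ltn0Sn i)); by rewrite /= Ep Eq E.
Qed.

Definition Efac l d (c : R) : {poly R} :=
  \sum_(j < l.+1) (c ^+ j / j`!%:R) *: 'X^(d * j).

Lemma deriv_sum (I : Type) (r : seq I) (P : pred I) (F : I -> {poly R}) :
  (\sum_(i <- r | P i) F i)^`() = \sum_(i <- r | P i) (F i)^`().
Proof. exact: raddf_sum. Qed.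

Lemma sat_Efac l k c : sat l ((c *+ k.+1) *: 'X^k) (Efac l k.+1 c).
Proof.
have Hd : (Efac l k.+1 c)^`() = (c *+ k.+1) *: ('X^k * Efac l k.+1 c)
     - (c *+ k.+1 * (c ^+ l / l`!%:R)) *: 'X^(k + k.+1 * l).
  rewrite /Efac deriv_sum big_ord_recl /= derivZ derivXn muln0 mulr0n scaler0 add0r.
  rewrite big_ord_recr /= mulrDr scalerDr.
  have -> : (c *+ k.+1) *: ('X^k * ((c ^+ l / l`!%:R) *: 'X^(k.+1 * l))) =
     (c *+ k.+1 * (c ^+ l / l`!%:R)) *: 'X^(k + k.+1 * l).
    by rewrite -scalerAr scalerA exprD.
  rewrite addrK mulr_sumr scaler_sumr.
  apply: eq_bigr => j _.
  rewrite /bump /= add1n derivZ derivXn.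
  have -> : ((k.+1 * j.+1).-1 = k + k.+1 * j)%N by rewrite mulnS; lia.
  rewrite -scalerAr scalerA -exprD -scaler_nat scalerA; congr (_ *: _).
  rewrite -[c *+ k.+1]mulr_natr factS !natrM exprS.
  have h1 : (j`!%:R : R) != 0 by rewrite pnatr_eq0 -lt0n fact_gt0.
  have h2 : (j.+1%:R : R) != 0 by rewrite pnatr_eq0.
  field; by rewrite h1 addrC natr1 h2.
move=> i Hi; rewrite Hd coefB coefZ [in X in _ - X]coefZ coefXn.
have -> : (i == k + k.+1 * l)%N = false.
  by apply/negbTE; rewrite neq_ltn; apply/orP; left; nia.
by rewrite mulr0 subr0 -scalerAl coefZ.
Qed.

Lemma sat_Qfac l (a : R) : sat l (\poly_(k < l) (- a ^+ k.+1)) (1 - a *: 'X).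
Proof.
move=> i Hi; rewrite derivB derivZ derivX -polyC1 derivC sub0r.
rewrite mulrBr mulr1 -scalerAr coefB coefZ coefMX coef_poly Hi coefN coefZ polyC1 coef1.
case: i Hi => [|i] Hi /=; first by rewrite mulr1 mulr0 subr0 expr1.
rewrite coef_poly ltnW // exprS; ring.
Qed.

Lemma prod_scaleXn (I : Type) (r : seq I) (a : I -> R) (m : I -> nat) :
  \prod_(i <- r) (a i *: 'X^(m i)) = (\prod_(i <- r) a i) *: 'X^(\sum_(i <- r) m i).
Proof.
elim: r => [|x r IH]; first by rewrite !big_nil scale1r.
by rewrite !big_cons IH -scalerAl -scalerAr scalerA exprD.
Qed.

End Poly.

End BB.
Section CC.
Local Open Scope ring_scope.

Section Main.
Variable R : numFieldType.

Definition Qp N : {poly R} := \prod_(1 <= n < N.+1) (1 - (n%:R)^-1 *: 'X).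
Definition Pp l (g : nat -> R) : {poly R} :=
  \prod_(k < l) Efac l k.+1 (g k.+1 / k.+1%:R).

Lemma sat_Pp l g : sat l (\poly_(k < l) g k.+1) (Pp l g).
Proof.
have -> : \poly_(k < l) g k.+1 = \sum_(k < l) ((g k.+1 / k.+1%:R) *+ k.+1) *: 'X^k.
  rewrite poly_def; apply: eq_bigr => k _; congr (_ *: _).
  by rewrite -mulr_natr divfK // pnatr_eq0.
by apply: sat_prod => k _; exact: sat_Efac.
Qed.

Lemma sat_Qp l N : sat l (\poly_(k < l) (- zetaN R N k.+1)) (Qp N).
Proof.
have -> : \poly_(k < l) (- zetaN R N k.+1) =
   \sum_(1 <= n < N.+1) \poly_(k < l) (- ((n%:R)^-1) ^+ k.+1).
  apply/polyP => i; rewrite coef_poly coef_sum.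
  under eq_bigr do rewrite coef_poly.
  case: ifP => _; last by rewrite big1.
  by rewrite /zetaN -sumrN; apply: eq_bigr => n _; rewrite exprVn.
by apply: sat_prod => n _; exact: sat_Qfac.
Qed.

Lemma Pp0 l g : (Pp l g)`_0 = 1.
Proof.
rewrite -horner_coef0 /Pp horner_prod big1 // => k _.
rewrite /Efac horner_sum big_ord_recl /= big1.
  by rewrite hornerZ muln0 !expr0 hornerC fact0 divr1 mulr1 addr0.
move=> j _; rewrite hornerZ hornerXn expr0n /=.
by rewrite mulr0.
Qed.

Lemma Qp0 N : (Qp N)`_0 = 1.
Proof.
rewrite -horner_coef0 /Qp horner_prod big1 // => n _.
by rewrite hornerE hornerN hornerZ hornerX mulr0 oppr0 addr0 -polyC1 hornerC.
Qed.

Lemma Zcyc_P l g : Zcyc l g = l`!%:R * (Pp l g)`_l.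
Proof.
rewrite /Pp /Efac bigA_distr_bigA /= coef_sum mulr_sumr /Zcyc.
rewrite [RHS](bigID (fun n : {ffun 'I_l -> 'I_l.+1} => (\sum_(k < l) k.+1 * n k == l)%N)) /=.
rewrite [X in _ = _ + X]big1 ?addr0; last first.
  move=> n /negbTE Hn; rewrite prod_scaleXn coefZ coefXn eq_sym Hn.
  by rewrite !mulr0.
apply: eq_bigr => n Hn; rewrite prod_scaleXn coefZ coefXn eq_sym Hn mulr1.
rewrite -mulrA; congr (_ * _).
rewrite -prodfV -big_split /=; apply: eq_bigr => k _.
rewrite expr_div_n invfM; ring.
Qed.

Lemma falling_succ (x : R) l : falling (x + 1) l = falling x l + l%:R * falling x l.-1.
Proof.
case: l => [|k]; first by rewrite /falling !big_ord0 mul0r addr0.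
rewrite /falling big_ord_recl big_ord_recr /=.
have -> : \prod_(i < k) (x + 1 - (bump 0 i)%:R) = \prod_(i < k) (x - i%:R).
  by apply: eq_bigr => i _; rewrite /bump /= add1n -natr1; ring.
set P := \prod_(i < k) _; rewrite -natr1; ring.
Qed.

Lemma falling0 l : falling (0 : R) l = (l == 0)%:R.
Proof.
case: l => [|k]; first by rewrite /falling big_ord0.
by rewrite /falling big_ord_recl /= subrr mul0r.
Qed.

Lemma F_formula N : forall l,
  \sum_(s : {perm 'I_N}) falling ((ncycles s)%:R : R) l =
  (-1) ^+ l * N`!%:R * l`!%:R * (Qp N)`_l.
Proof.
elim: N => [|N IH] l.
  rewrite (eq_bigr (fun _ => falling (0 : R) l)); last first.
    move=> s _; have H : (ncycles s <= 0)%N.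
      by rewrite /ncycles /porbits (leq_trans (leq_imset_card _ _)) // card_ord.
    by rewrite leqn0 in H; rewrite (eqP H).
  rewrite sumr_const card_Sn /= falling0 /Qp big_geq // coef1.
  by case: l => [|k]; rewrite /= ?expr0 ?mul1r ?mulr1 ?mulr0 ?mulr0n ?mulr1n ?fact0.
rewrite (sum_perm_succ N (fun c => falling (c%:R : R) l)) /=.
under eq_bigr do rewrite -natr1 falling_succ.
rewrite !big_split /= sumrMnl -mulr_sumr !IH.
have QS : Qp N.+1 = Qp N * (1 - (N.+1%:R)^-1 *: 'X) by rewrite /Qp big_nat_recr.
rewrite QS mulrBr mulr1 coefB -scalerAr coefZ coefMX.
have hN : (N.+1%:R : R) != 0 by rewrite pnatr_eq0.
case: l => [|k] /=.
  rewrite !mulr0 subr0 !expr0 !mul1r !fact0 !mulr1 factS natrM; ring.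
rewrite !factS !natrM !exprS.
field; by rewrite addrC natr1.
Qed.

End Main.

End CC.
End Aux.
Import Aux.
Local Open Scope ring_scope.

Theorem theorem3p1 (R : realFieldType) (N l : nat) (hl : (1 <= l)%N) :
  Ex_unif (fun s : {perm 'I_N} => falling ((ncycles s)%:R : R) l)
  = (-1) ^+ l * Zcyc l (fun m => - zetaN R N m).
Proof.
rewrite /Ex_unif F_formula card_Sn Zcyc_P.
have E : (Pp l (fun m => - zetaN R N m))`_l = (Qp R N)`_l.
  have := sat_uniq (@sat_Pp R l (fun m => - zetaN R N m)) (@sat_Qp R l N).
  by rewrite Pp0 Qp0; apply.
rewrite E.
have hN : (N`!%:R : R) != 0 by rewrite pnatr_eq0 -lt0n fact_gt0.
by field.
Qed.
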